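(* Let $\langle\mathcal{D},\sigma,\varphi\rangle$ be a hybrid temporal achievement causal setting. Then $$\mathcal{D}\models\mathit{AchvSit}(s_\varphi,\varphi,\sigma)\land\sigma<s^*\land\big(\forall s',t.\;\sigma\le s'\le s^*\land\mathit{start}(s')\le t\le\mathit{end}(s',s^* )\supset\varphi[t,s']\big)\supset\mathit{AchvSit}(s_\varphi,\varphi,s^* )$$ (free variables $s_\varphi,s^*$ universally quantified).
   Context: Hybrid temporal situation calculus (HTSC): $S_0$ initial situation, $do(a,s)$ successor situation, $do([a_1,\dots,a_n],s)$ the nesting. $s\sqsubset s'$: $s'$ reachable from $s$ by one or more actions; $s\sqsubseteq s'$: $s\sqsubset s'\lor s=s'$. $\mathit{time}(a(\vec x,t))=t$, $\mathit{start}(do(a,s))=\mathit{time}(a)$. $\mathit{Exec}(s)\doteq\forall a,s'.(do(a,s')\sqsubseteq s\supset\mathit{Poss}(a,s')\land\mathit{start}(s')\le\mathit{time}(a))$; $s<s'$ abbreviates $s\sqsubset s'\land\mathit{Exec}(s')$; $s\le s'$ abbreviates $s<s'\lor s=s'$. A hybrid basic action theory $\mathcal{D}$ contains initial-state, precondition, successor-state (discrete fluents), state evolution (temporal fluents), unique-names and foundational axioms; each temporal fluent $f$ has a state evolution axiom $f(\vec x,t,s)=y\equiv[\bigvee_i(\gamma^f_i(\vec x,s)\land\delta_i(\vec x,y,t,s))\lor(y=f(\vec x,\mathit{start}(s),s)\land\neg\bigvee_i\gamma^f_i(\vec x,s))]$ with mutually exclusive contexts $\gamma^f_i$. An effect $\varphi$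 is a situation- and time-suppressed formula, uniform in the situation, constraining the value of a single primitive temporal fluent $f$; $\varphi[t,s]$ restores time $t$ and situation $s$. $\mathit{end}(s',s)=\mathit{start}(s')$ if $s'=s$; $=\mathit{time}(a)$ if $do(a,s')\le s$. $\mathit{AchvSitAux}(s_\varphi,\varphi,s)\doteq\varphi[\mathit{end}(s_\varphi,s),s_\varphi]\land\forall s',t.(s_\varphi<s'\le s\land\mathit{start}(s')\le t\le\mathit{end}(s',s)\supset\varphi[t,s'])$; $\mathit{AchvSit}(s_\varphi,\varphi,s)\doteq\mathit{AchvSitAux}(s_\varphi,\varphi,s)\land\neg\exists s''.(s''<s_\varphi\land\mathit{AchvSitAux}(s'',\varphi,s))$. Hybrid temporal achievement causal setting $\langle\mathcal{D},\sigma,\varphi\rangle$: $\sigma=do([\alpha_1,\dots,\alpha_n],S_0)$ ground, $n\ge1$, and $\mathcal{D}\models\mathit{Exec}(\sigma)\land\neg\varphi[\mathit{start}(S_0),S_0]\land\neg\varphi[\mathit{time}(\alpha_1),S_0]\land\varphi[\mathit{start}(\sigma),\sigma]$. *)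

(* Defs.v *)
From Stdlib Require Import Reals List.
Open Scope R_scope.
Set Implicit Arguments.

(* The part of a model of a hybrid basic action theory D that the statement
   talks about.  The situation sort is the standard model of the foundational
   axioms: situations are finite sequences of actions (most recent first),
   S0 = nil, do(a,s) = a :: s.  Actions form an abstract sort with a time
   function; Poss is arbitrary (precondition axioms); start0 = start(S0). *)
Record frame := Frame {
  act : Type;
  time : act -> R;
  Poss : act -> list act -> Prop;
  start0 : R }.

Definition sit (M : frame) := list (act M).
Definition S0 {M : frame} : sit M := nil.
Definition do_ {M : frame} (a : act M) (s : sit M) : sit M := a :: s.

Fixpoint do_seq {M : frame} (l : list (act M)) (s : sit M) : sit M :=
  match l with nil => s | a :: l' => do_seq l' (do_ a s) end.

Definition start {M : frame} (s : sit M) : R :=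
  match s with nil => start0 M | a :: _ => time M a end.

Definition sub {M : frame} (s s' : sit M) : Prop :=
  exists l, l <> nil /\ s' = l ++ s.
Definition subeq {M : frame} (s s' : sit M) : Prop := sub s s' \/ s = s'.

Definition Exec {M : frame} (s : sit M) : Prop :=
  forall a s', subeq (do_ a s') s -> Poss M a s' /\ start s' <= time M a.

Definition slt {M : frame} (s s' : sit M) : Prop := sub s s' /\ Exec s'.
Definition sle {M : frame} (s s' : sit M) : Prop := slt s s' \/ s = s'.

(* end(s',s) = t, as a (partial, functional) relation:
   start(s') if s' = s; time(a) if do(a,s') <= s. *)
Definition End_ {M : frame} (s' s : sit M) (t : R) : Prop :=
  (s' = s /\ t = start s') \/ (exists a, sle (do_ a s') s /\ t = time M a).

Definition AchvSitAux {M : frame} (phi : R -> sit M -> Prop) (sphi s : sit M) : Prop :=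
  (exists e, End_ sphi s e /\ phi e sphi) /\
  (forall s' t, slt sphi s' -> sle s' s ->
     forall e, End_ s' s e -> start s' <= t <= e -> phi t s').

Definition AchvSit {M : frame} (phi : R -> sit M -> Prop) (sphi s : sit M) : Prop :=
  AchvSitAux phi sphi s /\ ~ (exists s'', slt s'' sphi /\ AchvSitAux phi s'' s).

Definition state_evolution {M : frame} {V : Type} (f : R -> sit M -> V) : Prop :=
  exists (n : nat) (gamma : nat -> sit M -> Prop) (delta : nat -> V -> R -> sit M -> Prop),
    (forall i j s, (i < n)%nat -> (j < n)%nat -> gamma i s -> gamma j s -> i = j) /\
    (forall t s y, f t s = y <->
       ((exists i, (i < n)%nat /\ gamma i s /\ delta i y t s) \/
        (y = f (start s) s /\ ~ (exists i, (i < n)%nat /\ gamma i s)))).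

(* Hybrid temporal achievement causal setting <D, sigma, phi>, with
   sigma = do([a1 :: alphas], S0) (so n >= 1) and phi[t,s] = Phi(f(t,s)). *)
Definition causal_setting {M : frame} (phi : R -> sit M -> Prop)
    (a1 : act M) (alphas : list (act M)) : Prop :=
  let sigma := do_seq (a1 :: alphas) S0 in
  Exec sigma /\ ~ phi (start (@S0 M)) S0 /\ ~ phi (time M a1) S0 /\
  phi (start sigma) sigma.

(* Main.v *)
Require Import Defs.
From Stdlib Require Import Reals List Lia.
Open Scope R_scope.

Section H.
Context {M : frame}.
Implicit Types s x y z : sit M.
Local Set Implicit Arguments.

Lemma subeq_ex x y : subeq x y <-> exists l, y = l ++ x.
Proof.
  split.
  - intros [[l [_ H]]|H]; [eauto|exists nil; subst; reflexivity].
  - intros [[|b l] H]; [right; subst; reflexivity|left; exists (b::l); split; [discriminate|auto]].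
Qed.

Lemma sub_len x y : sub x y -> (length x < length y)%nat.
Proof. intros [[|b l] [H ->]]; [congruence|simpl; rewrite length_app; lia]. Qed.

Lemma subeq_len x y : subeq x y -> (length x <= length y)%nat.
Proof. intros H; apply subeq_ex in H as [l ->]; rewrite length_app; lia. Qed.

Lemma subeq_trans x y z : subeq x y -> subeq y z -> subeq x z.
Proof.
  rewrite !subeq_ex; intros [l1 ->] [l2 ->]; exists (l2 ++ l1); rewrite app_assoc; auto.
Qed.

Lemma sub_subeq x y : sub x y -> subeq x y.
Proof. left; auto. Qed.

Lemma sub_subeq_trans x y z : sub x y -> subeq y z -> sub x z.
Proof.
  intros [l1 [Hl ->]] H2; apply subeq_ex in H2 as [l2 ->].
  exists (l2 ++ l1); split; [destruct l1; [congruence|destruct l2; discriminate]|rewrite app_assoc; auto].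
Qed.

Lemma Exec_down x y : Exec y -> subeq x y -> Exec x.
Proof. intros HE Hs a s' H; apply HE; eapply subeq_trans; eauto. Qed.

Lemma sle_subeq x y : sle x y -> subeq x y.
Proof. intros [[H _]|H]; [left; auto|right; auto]. Qed.

Lemma mk_sle x y : subeq x y -> Exec y -> sle x y.
Proof. intros [H|H] HE; [left; split; auto|right; auto]. Qed.

Lemma sle_Exec x y : sle x y -> Exec y -> Exec x.
Proof. intros H HE; eapply Exec_down; eauto using sle_subeq. Qed.

Lemma sle_trans x y z : sle x y -> sle y z -> sle x z.
Proof.
  intros H1 H2. destruct H2 as [[Hs HE]|<-]; [|auto].
  apply mk_sle; auto. eapply subeq_trans; [apply sle_subeq; eauto|left; auto].
Qed.


Lemma comparable x y z : subeq x z -> subeq y z -> subeq x y \/ sub y x.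
Proof.
  rewrite !subeq_ex; intros [l1 ->] [l2 H].
  symmetry in H.
  apply app_eq_app in H as [l [[-> H]|[-> H]]].
  - destruct l as [|b l].
    + left; exists nil; auto.
    + right. exists (b::l); split; [discriminate|auto].
  - left. exists l; auto.
Qed.

Lemma key a x y z : sub x y -> subeq (a :: x) z -> subeq y z -> subeq (a :: x) y.
Proof.
  intros H1 H2 H3. destruct (comparable H2 H3) as [H|H]; auto.
  apply sub_len in H; apply sub_len in H1; simpl in *; lia.
Qed.

Lemma subeq_cons a x : subeq x (a :: x).
Proof. apply subeq_ex; exists (a::nil); auto. Qed.

Lemma main (phi : R -> sit M -> Prop) sg sphi ss :
  Exec sg -> phi (start sg) sg -> AchvSit phi sphi sg -> slt sg ss ->
  (forall s' t, sle sg s' -> sle s' ss -> forall e, End_ s' ss e -> start s' <= t <= e -> phi t s') ->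
  AchvSit phi sphi ss.
Proof.
  intros Hexg Hp0 [[[e [HE Hpe]] Hall] Hmin] Hlt Hext.
  pose proof Hlt as [Hsub HexS].
  assert (Hsphi : subeq sphi sg).
  { destruct HE as [[-> _]|[a [Hle _]]]; [right; auto|].
    eapply subeq_trans; [apply subeq_cons|apply sle_subeq; eauto]. }
  split; [split|].
  - destruct HE as [[Heq He]|[a [Hle ->]]].
    + subst sphi e. destruct Hsub as [l [Hl Hs]].
      destruct (exists_last Hl) as [l' [b Hb]]. subst l.
      assert (Hb : sle (b :: sg) ss).
      { apply mk_sle; auto. apply subeq_ex. exists l'. rewrite Hs, <- app_assoc; auto. }
      exists (time M b). split; [right; exists b; auto|].
      apply (Hext sg (time M b) (or_intror eq_refl) (or_introl Hlt) (time M b)).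
      * right; exists b; auto.
      * split; [|apply Rle_refl]. apply (HexS b sg). apply sle_subeq; auto.
    + exists (time M a); split; auto. right; exists a; split; auto.
      eapply sle_trans; eauto; left; auto.
  - intros s' t Hs1 Hs2 e' HE' Ht.
    destruct (comparable (sle_subeq Hs2) (sub_subeq Hsub)) as [[Hc|Hc]|Hc].
    + destruct HE' as [[Heq _]|[a [Hle' ->]]].
      * subst s'. apply sub_len in Hc; apply sub_len in Hsub; lia.
      * apply (Hall s' t Hs1 (mk_sle (sub_subeq Hc) Hexg) (time M a)); auto.
        right; exists a; split; auto.
        apply mk_sle; auto. eapply key; eauto using sle_subeq, sub_subeq.
    + subst s'. eapply Hext; eauto. right; auto.
    + eapply Hext; eauto. left; split; auto. eapply sle_Exec; eauto.
  - intros [s'' [Hlt'' [[e2 [HE2 Hp2]] Hall2]]]. apply Hmin. exists s''; split; auto.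
    assert (Hs'' : sub s'' sg) by (eapply sub_subeq_trans; [apply Hlt''|auto]).
    split.
    + destruct HE2 as [[Heq _]|[a [Hle2 ->]]].
      * subst s''. apply sub_len in Hs''; apply sub_len in Hsub; lia.
      * exists (time M a); split; auto. right; exists a; split; auto.
        apply mk_sle; auto. eapply key; eauto using sle_subeq, sub_subeq.
    + intros s' t H1 H2 e3 HE3 Ht. destruct HE3 as [[Heq He]|[a [Hle3 ->]]].
      * subst s' e3. replace t with (start sg) by (destruct Ht; apply Rle_antisym; auto). auto.
      * apply (Hall2 s' t H1 (sle_trans H2 (or_introl Hlt)) (time M a)); auto.
        right; exists a; split; auto. eapply sle_trans; eauto; left; auto.
Qed.
End H.

Theorem lemma5p5 (M : frame) (V : Type) (f : R -> sit M -> V) (Phi : V -> Prop)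
    (a1 : act M) (alphas : list (act M)) :
  state_evolution f ->
  causal_setting (fun t s => Phi (f t s)) a1 alphas ->
  forall sphi sstar : sit M,
    AchvSit (fun t s => Phi (f t s)) sphi (do_seq (a1 :: alphas) S0) ->
    slt (do_seq (a1 :: alphas) S0) sstar ->
    (forall s' t, sle (do_seq (a1 :: alphas) S0) s' -> sle s' sstar ->
       forall e, End_ s' sstar e -> start s' <= t <= e -> Phi (f t s')) ->
    AchvSit (fun t s => Phi (f t s)) sphi sstar.
Proof.
  intros _ [Hex [_ [_ Hp]]] sphi sstar HA Hlt Hext.
  eapply main; eauto.
Qed.
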